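(* Let $m\ge 2$, let $\varepsilon \le \frac{1}{2^{3m}\cdot 4m}$ be a power of 2, let $0<\tau<1$, and let $\mathcal{G} = \{2^{-i}\varepsilon j : i \in \mathbb{Z},\ j \in \{1,\dots,2/\varepsilon^2 - 1\}\} \cap (0,1)$. Consider the following rounding procedure applied to a value $x \in [0,1]$: while $x \ge \tau$, let $y$ be the largest element of $\mathcal{G}$ with $y \le x$, output $y$ as a new state and replace $x$ by $x-y$; when $x<\tau$, output the remaining $x$ as a final state. If this procedure is applied to each state of a discrete distribution $p_i$ with at most $n$ states (replacing each state by the multiset of outputs), then the resulting distribution has at most $n\lceil 1 + \log_2(1/\tau)\rceil$ states.
   Context: Logarithms are base 2. *)

(* Defs.v *)
From HB Require Import structures.
From mathcomp Require Import all_boot all_order all_algebra.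
From mathcomp Require Import all_classical all_reals all_analysis.
Set Implicit Arguments. Unset Strict Implicit. Unset Printing Implicit Defensive.
Import Order.TTheory GRing.Theory Num.Theory.
Local Open Scope ring_scope.

Definition log2 {R : realType} (x : R) : R := ln x / ln 2.

Definition in_grid {R : realType} (eps g : R) : Prop :=
  (exists (i : int) (j : nat),
      (1 <= j)%N /\ j%:R <= 2 / eps ^+ 2 - 1 /\
      g = (2 : R) ^ (- i) * eps * j%:R)
  /\ 0 < g /\ g < 1.

Definition largest_grid_below {R : realType} (eps x y : R) : Prop :=
  in_grid eps y /\ y <= x /\ forall g, in_grid eps g -> g <= x -> g <= y.

Inductive round_outputs {R : realType} (eps tau : R) : R -> seq R -> Prop :=
| ro_stop x : x < tau -> round_outputs eps tau x [:: x]
| ro_step x y s : tau <= x -> largest_grid_below eps x y ->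
    round_outputs eps tau (x - y) s -> round_outputs eps tau x (y :: s).

Definition power_of_2 {R : realType} (eps : R) : Prop :=
  exists k : int, eps = (2 : R) ^ k.

(* Main.v *)
Require Import Defs.
From HB Require Import structures.
From mathcomp Require Import all_boot all_order all_algebra.
From mathcomp Require Import all_classical all_reals all_analysis.
From mathcomp Require Import lra.
Import Order.TTheory GRing.Theory Num.Theory.
Local Open Scope ring_scope.

Lemma pow2_big {R : realType} (a : R) : exists n : nat, a < (2 : R) ^+ n.
Proof.
have [a0|a0] := leP a 0.
  by exists 0%N; rewrite expr0; lra.
have := archi_boundP (ltW a0); set n := Num.Def.archi_bound a => Ha.
exists n; apply: (lt_le_trans Ha).
rewrite -natrX ler_nat; exact/ltnW/ltn_expl.
Qed.

Lemma pow2_gt0 (R : realType) (n : nat) : 0 < (2 : R) ^+ n.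
Proof. by apply: exprn_gt0; lra. Qed.

Lemma pow2_negz_le1 (R : realType) (n : nat) : (2 : R) ^ (Negz n) <= 1.
Proof.
rewrite NegzE -exprnN invr_le1 ?pow2_gt0 //.
- rewrite -natrX ler1n; exact: expn_gt0.
- by rewrite unitfE gt_eqF // pow2_gt0.
Qed.

Lemma grid_half {R : realType} (eps x : R) :
  power_of_2 eps -> eps <= 1/2 -> 0 < x -> x <= 1 ->
  exists g, in_grid eps g /\ x / 2 < g /\ g < x.
Proof.
case=> k epsE heps x0 x1.
have eps0 : 0 < eps by rewrite epsE exprz_gt0 //; lra.
pose P := fun e : nat => 2 < x * (2 : R) ^+ e.
have Pex : exists e, P e.
  have [n Hn] := pow2_big (2 / x).
  exists n; rewrite /P.
  have e2 : (2 : R) = (2 / x) * x by rewrite divfK // gt_eqF.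
  by rewrite {1}e2 [X in _ < X]mulrC ltr_pM2r.
case: (ex_minnP Pex) => e0 Pe0 mine0.
have e0pos : (0 < e0)%N.
  case: e0 Pe0 mine0 => // ; rewrite /P expr0; lra.
have notP : ~~ P e0.-1.
  apply/negP => H; have := mine0 _ H; case: e0 e0pos {Pe0 mine0 H} => // e _.
  by rewrite ltnn.
set T := (2 : R) ^+ e0.
have TE : T = 2 * (2 : R) ^+ e0.-1 by rewrite /T -exprS prednK.
have T0 : 0 < T by apply: pow2_gt0.
have hT1 : 2 < x * T by [].
have hT2 : x * T <= 4.
  move: notP; rewrite /P -leNgt TE => H.
  have := pow2_gt0 R e0.-1; nra.
pose Q := fun N : nat => x * T <= N%:R.
have Qex : exists N, Q N.
  exists (Num.Def.archi_bound (x * T)); apply/ltW/archi_boundP; nra.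
case: (ex_minnP Qex) => N0 QN0 minN0.
have N0ge : (3 <= N0)%N.
  rewrite leqNgt; apply/negP => H.
  have : (N0%:R : R) <= 2%:R by rewrite ler_nat -ltnS.
  move: QN0; rewrite /Q; lra.
set j := N0.-1.
have hj1 : (j%:R : R) < x * T.
  rewrite ltNge; apply/negP => H; have := minN0 _ H.
  by rewrite /j; case: (N0) N0ge => // n _; rewrite ltnn.
have hj2 : x * T <= j%:R + 1.
  by rewrite natr1 /j prednK //; apply: leq_trans N0ge.
have hj3 : (j%:R : R) <= 3.
  have : (j < 4)%N by rewrite -(ltr_nat R); lra.
  by rewrite ltnS -(ler_nat R).
have hj4 : (1 <= j)%N by rewrite /j -ltnS prednK //; apply: leq_trans N0ge.
have hj5 : (1 : R) <= j%:R by rewrite ler1n.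
exists (j%:R / T); split; last first.
  split.
  - rewrite ltr_pdivlMr //; nra.
  - rewrite ltr_pdivrMr //; lra.
split; last first.
  have : j%:R / T < x by rewrite ltr_pdivrMr //; lra.
  have : 0 < j%:R / T by apply: divr_gt0 => //; lra.
  lra.
exists (k + e0%:Z), j; split => //; split.
- have e2 : eps ^+ 2 <= 1/4.
    rewrite expr2; nra.
  have e20 : 0 < eps ^+ 2 by rewrite exprn_gt0.
  have : 8 <= 2 / eps ^+ 2.
    rewrite ler_pdivlMr //; lra.
  lra.
- rewrite epsE -expfzDr; last by rewrite pnatr_eq0.
  rewrite (_ : - (k + e0%:Z) + k = - e0%:Z); last by rewrite opprD addrAC addNr add0r.
  by rewrite -exprnN mulrC.
Qed.

Lemma grid_discrete {R : realType} (eps x : R) :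
  power_of_2 eps -> 0 < x ->
  exists u0 : R, 0 < u0 /\
    forall g, in_grid eps g -> x / 2 < g -> exists N : nat, g = N%:R * u0.
Proof.
case=> k epsE x0.
have eps0 : 0 < eps by rewrite epsE exprz_gt0 //; lra.
set E := eps ^+ 2.
have E0 : 0 < E by rewrite exprn_gt0.
have xE0 : 0 < x * E by rewrite mulr_gt0.
have [e He] := pow2_big (4 / (x * E)).
have He' : 4 < x * E * (2 : R) ^+ e.
  by rewrite mulrC -ltr_pdivrMr.
exists ((2 : R) ^+ e)^-1; split; first by rewrite invr_gt0 pow2_gt0.
move=> g [[i [j [hj1 [hj2 gE]]]] _] hg.
set d := - i + k.
have hd : (2 : R) ^ (- i) * eps = 2 ^ d by rewrite epsE -expfzDr // pnatr_eq0.
set D := (2 : R) ^ d in hd.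
have D0 : 0 < D by rewrite exprz_gt0 //; lra.
rewrite hd in gE.
set J := (j%:R : R) in hj2 gE.
have hJE : J * E <= 2 - E.
  have : J * E <= (2 / E - 1) * E by rewrite ler_pM2r.
  by rewrite mulrBl divfK ?mul1r // gt_eqF.
have h1 : x * E < 4 * D.
  have : x / 2 * E < D * J * E by rewrite ltr_pM2r // -gE.
  nra.
have h2 : 1 < D * (2 : R) ^+ e.
  have := pow2_gt0 R e; nra.
have hw : (2 : R) ^ (d + e%:Z) = D * (2 : R) ^+ e.
  by rewrite expfzDr ?pnatr_eq0 // exprnP.
move: hw; case: (d + e%:Z) => n hw.
- exists (2 ^ n * j)%N.
  rewrite gE natrM natrX exprnP hw.
  by rewrite [RHS]mulrAC mulfK // gt_eqF // pow2_gt0.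
- have := pow2_negz_le1 R n; rewrite hw; lra.
Qed.

Lemma largest_exists (R : realType) (eps x : R) :
  power_of_2 eps -> eps <= 1/2 -> 0 < x -> x <= 1 ->
  exists y, largest_grid_below eps x y.
Proof.
move=> p2 heps x0 x1.
have [g0 [Gg0 [g0a g0b]]] := grid_half _ _ p2 heps x0 x1.
have [u0 [u00 Hu]] := grid_discrete _ _ p2 x0.
pose P := fun N : nat =>
  `[< in_grid eps (N%:R * u0) /\ x / 2 < N%:R * u0 /\ N%:R * u0 <= x >].
have exP : exists N, P N.
  have [N gN] := Hu g0 Gg0 g0a.
  exists N; apply/asboolP; rewrite -gN; split => //; split => //; lra.
have ubP : forall N, P N -> (N <= Num.Def.archi_bound (x / u0))%N.
  move=> N /asboolP [_ [_ HN]].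
  have := archi_boundP (x:=x / u0) (ltW (divr_gt0 x0 u00)).
  have : (N%:R : R) <= x / u0 by rewrite ler_pdivlMr.
  move=> h1 h2; rewrite -(ler_nat R); apply/ltW; exact: (le_lt_trans h1 h2).
case: (ex_maxnP exP ubP) => Nm /asboolP [GN [HN1 HN2]] maxN.
exists (Nm%:R * u0); split => //; split => // g Gg gx.
have [gs|gl] := leP g (x / 2); first lra.
have [N gN] := Hu g Gg gl.
have PN : P N by apply/asboolP; rewrite -gN.
by rewrite gN ler_pM2r // ler_nat maxN.
Qed.

Lemma largest_half (R : realType) (eps x y : R) :
  power_of_2 eps -> eps <= 1/2 -> 0 < x -> x <= 1 ->
  largest_grid_below eps x y -> x / 2 < y.
Proof.
move=> p2 heps x0 x1 [_ [_ Hy]].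
have [g0 [Gg0 [g0a g0b]]] := grid_half _ _ p2 heps x0 x1.
have := Hy g0 Gg0 (ltW g0b); lra.
Qed.

Lemma ro_exists (R : realType) (eps tau : R) :
  power_of_2 eps -> eps <= 1/2 -> 0 < tau ->
  forall (N : nat) x, 0 <= x <= 1 -> x < tau * 2 ^+ N ->
  exists s, round_outputs eps tau x s.
Proof.
move=> p2 heps tau0; elim=> [|N IH] x /andP [x0 x1] hx.
  by exists [:: x]; apply: ro_stop; rewrite expr0 mulr1 in hx.
have [xt|tx] := ltP x tau; first by exists [:: x]; apply: ro_stop.
have xp : 0 < x by lra.
have [y Hy] := largest_exists _ _ _ p2 heps xp x1.
have yh := largest_half _ _ _ _ p2 heps xp x1 Hy.
case: (Hy) => [[_ [y0 _]] [yx _]].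
have [s Hs] : exists s, round_outputs eps tau (x - y) s.
  apply: IH; first by apply/andP; split; lra.
  move: hx; rewrite exprS; lra.
by exists (y :: s); apply: ro_step.
Qed.

Lemma ro_size_pos (R : realType) (eps tau x : R) s :
  round_outputs eps tau x s -> (0 < size s)%N.
Proof. by case. Qed.

Lemma ro_len (R : realType) (eps tau : R) :
  power_of_2 eps -> eps <= 1/2 -> 0 < tau ->
  forall x s, round_outputs eps tau x s -> x <= 1 ->
  size s = 1%N \/
  (tau * 2 ^+ (size s - 2) <= x /\ ((3 <= size s)%N -> tau * 2 ^+ (size s - 2) < x)).
Proof.
move=> p2 heps tau0 x s; elim => {x s} [x xt|x y s tx Hy Hs IH] x1; first by left.
right.
have xp : 0 < x by lra.
have yh := largest_half _ _ _ _ p2 heps xp x1 Hy.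
case: (Hy) => [[_ [y0 _]] [yx _]].
have := ro_size_pos _ _ _ _ _ Hs.
case: s Hs IH => [|a [|b s]] Hs IH //= _.
  by rewrite subnn expr0 mulr1; split.
case: IH; first lra; first by [].
rewrite !subSS !subn0 => [[h1 h2]].
rewrite exprS; split; lra.
Qed.

Lemma size_bound (R : realType) (eps tau x : R) s :
  power_of_2 eps -> eps <= 1/2 -> 0 < tau -> tau < 1 -> x <= 1 ->
  round_outputs eps tau x s ->
  ((size s)%:Z <= Num.ceil (1 + log2 (1 / tau)))%R.
Proof.
move=> p2 heps tau0 tau1 x1 Hs.
have it0 : 0 < 1 / tau by rewrite divr_gt0.
have it1 : 1 < 1 / tau by rewrite div1r invf_gt1.
have ln2 : 0 < ln (2 : R) by rewrite ln_gt0 //; lra.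
set L := log2 (1 / tau).
have L0 : 0 < L by rewrite /L /log2 divr_gt0 // ln_gt0.
have key : (size s)%:R - 1 < 1 + L.
  case: (ro_len _ _ _ p2 heps tau0 _ _ Hs x1) => [->|[h1 h2]]; first lra.
  have [t3|t2] := leqP 3 (size s); last first.
    have : ((size s)%:R : R) <= 2%:R by rewrite ler_nat -ltnS.
    lra.
  have h := h2 t3.
  have h4 : (2 : R) ^+ (size s - 2) < 1 / tau.
    rewrite ltr_pdivlMr //; rewrite mulrC; lra.
  have h5 : ln ((2 : R) ^+ (size s - 2)) < ln (1 / tau).
    by rewrite ltr_ln // posrE // pow2_gt0.
  rewrite lnXn in h5; last lra.
  have h6 : ((size s - 2)%:R : R) < L.
    by rewrite /L /log2 ltr_pdivlMr // mulr_natl.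
  have : ((size s)%:R : R) = (size s - 2)%:R + 2%:R.
    by rewrite -natrD subnK // ltnW.
  lra.
have [//|H] := leP ((size s)%:Z) (Num.ceil (1 + L)).
have H1 : Num.ceil (1 + L) <= (size s)%:Z - 1.
  by rewrite -(lerD2r 1) subrK lezD1.
have := ceil_ge (1 + L).
have : ((Num.ceil (1 + L))%:~R : R) <= ((size s)%:Z - 1)%:~R by rewrite ler_int.
rewrite intrD /=.
lra.
Qed.


Lemma size_flatten_bound {T : Type} (outs : seq (seq T)) (c : nat) :
  (forall i, (i < size outs)%N -> (size (nth [::] outs i) <= c)%N) ->
  (size (flatten outs) <= size outs * c)%N.
Proof.
elim: outs => [|s outs IH] //= h.
rewrite size_cat mulSn leq_add //; first exact: (h 0%N).
by apply: IH => i hi; exact: (h i.+1).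
Qed.

Theorem claim5 (R : realType) (m n : nat) (eps tau : R) (p : seq R) :
  (2 <= m)%N ->
  power_of_2 eps ->
  eps <= 1 / ((2 : R) ^+ (3 * m) * (4 * m)%:R) ->
  0 < tau -> tau < 1 ->
  (size p <= n)%N ->
  (forall x, x \in p -> 0 <= x <= 1) ->
  \sum_(x <- p) x = 1 ->
  (exists outs : seq (seq R), size outs = size p /\
     forall i, (i < size p)%N -> round_outputs eps tau (nth 0 p i) (nth [::] outs i))
  /\
  (forall outs : seq (seq R), size outs = size p ->
     (forall i, (i < size p)%N -> round_outputs eps tau (nth 0 p i) (nth [::] outs i)) ->
     (size (flatten outs))%:R <= n%:R * ((Num.ceil (1 + log2 (1 / tau)))%:~R : R)).
Proof.
move=> m2 p2 heps0 tau0 tau1 pn prange _.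
have heps : eps <= 1 / 2.
  apply: (le_trans heps0).
  have h1 : (1 : R) <= 2 ^+ (3 * m) by rewrite -natrX ler1n expn_gt0.
  have h2 : (8%:R : R) <= (4 * m)%:R.
    by rewrite ler_nat (_ : 8 = 4 * 2)%N // leq_mul2l.
  rewrite !div1r lef_pV2 ?posrE //; first nra.
  apply: mulr_gt0; lra.
have ex1 : forall x, 0 <= x <= 1 -> exists s, round_outputs eps tau x s.
  move=> x hx; have [N HN] := pow2_big (1 / tau).
  apply: (ro_exists _ _ _ p2 heps tau0 N x hx).
  move: HN; rewrite ltr_pdivrMr // mulrC; case/andP: hx; lra.
split.
  elim: p {pn} prange => [|a p IH] hp.
    by exists [::]; split.
  have [s Hs] := ex1 a (hp a (mem_head _ _)).
  have [outs [so Ho]] : exists outs : seq (seq R), size outs = size p /\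
     forall i, (i < size p)%N -> round_outputs eps tau (nth 0 p i) (nth [::] outs i).
    by apply: IH => x hx; apply: hp; rewrite inE hx orbT.
  exists (s :: outs); split; first by rewrite /= so.
  by case => [|i] //= hi; apply: Ho.
move=> outs so Ho.
set C := Num.ceil (1 + log2 (1 / tau)).
have [s0 Hs0] := ex1 0 (ltac:(apply/andP; split; lra)).
have C1 : (1 <= C)%R.
  apply: le_trans (size_bound _ _ _ _ _ p2 heps tau0 tau1 _ Hs0); last lra.
  by rewrite lez_nat; apply: (ro_size_pos _ _ _ _ _ Hs0).
have C0 : (0 <= C)%R by apply: le_trans C1.
have hs : forall i, (i < size outs)%N -> (size (nth [::] outs i) <= `|C|)%N.
  move=> i hi; rewrite so in hi.
  have := size_bound _ _ _ _ _ p2 heps tau0 tau1 _ (Ho i hi).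
  rewrite -lez_nat gez0_abs //; apply.
  by case/andP: (prange _ (mem_nth 0 hi)).
have := size_flatten_bound _ _ hs; rewrite so => hf.
have hf2 : (size (flatten outs) <= n * `|C|)%N.
  by apply: (leq_trans hf); rewrite leq_mul2r pn orbT.
rewrite -[C](gez0_abs C0) -natrM ler_nat //.
Qed.
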